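(* A uniformly random string over an alphabet of size $O(\varepsilon^{-3})$ satisfies the $\varepsilon$-self-matching property with constant probability.
   Context: A monotone matching between a string $S$ and itself is a set of pairs $(a_1,b_1),\dots,(a_m,b_m)$ with $a_1<\dots<a_m$, $b_1<\dots<b_m$ and $S[a_i]=S[b_i]$; a pair is bad if $a_i\ne b_i$. $S$ satisfies the $\varepsilon$-self-matching property if every monotone matching between $S$ and itself contains fewer than $\varepsilon|S|$ bad pairs. ''Constant probability'' means a probability bounded below by a positive constant independent of the string length. *)

(* Defs.v *)
From mathcomp Require Import all_boot all_order all_algebra.
From mathcomp Require Export reals.
Set Implicit Arguments. Unset Strict Implicit. Unset Printing Implicit Defensive.
Import Order.TTheory GRing.Theory Num.Theory.
Local Open Scope ring_scope.

(* A string of length n over the alphabet 'I_k is S : {ffun 'I_n -> 'I_k}. *)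

(* A monotone matching between S and itself, as a finite set M of index pairs
   (a,b) with S a = S b, such that any two pairs are ordered the same way in
   both coordinates; listing M in increasing order gives exactly
   a_1 < ... < a_m and b_1 < ... < b_m. *)
Definition monotone_matching (n k : nat) (S : {ffun 'I_n -> 'I_k})
    (M : {set 'I_n * 'I_n}) : bool :=
  [forall p in M, S p.1 == S p.2] &&
  [forall p in M, forall q in M, ((p.1 < q.1)%N == (p.2 < q.2)%N)].

Definition bad_pairs (n : nat) (M : {set 'I_n * 'I_n}) : nat :=
  #|[set p in M | p.1 != p.2]|.

Definition self_matching (R : realType) (eps : R) (n k : nat)
    (S : {ffun 'I_n -> 'I_k}) : bool :=
  [forall M : {set 'I_n * 'I_n},
     monotone_matching S M ==> ((bad_pairs M)%:R < eps * n%:R)].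

Definition prob_self_matching (R : realType) (eps : R) (n k : nat) : R :=
  (#|[set S : {ffun 'I_n -> 'I_k} | self_matching eps S]|)%:R / (k ^ n)%:R.

(* Main.v *)
Require Import Defs.
From mathcomp Require Import all_boot all_order all_algebra.
From mathcomp Require Import reals.
From mathcomp Require Import sequences exp ring lra zify.
Import Order.TTheory GRing.Theory Num.Theory.

Module CombM.
Set Implicit Arguments. Unset Strict Implicit. Unset Printing Implicit Defensive.

Definition mono n (P : {set 'I_n * 'I_n}) : bool :=
  [forall p in P, forall q in P, ((p.1 < q.1)%N == (p.2 < q.2)%N)].
Definition allbad n (P : {set 'I_n * 'I_n}) : bool := [forall p in P, p.1 != p.2].
Definition maxo n (p : 'I_n * 'I_n) : 'I_n := if (p.1 < p.2)%N then p.2 else p.1.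

Lemma val_maxo n (p : 'I_n * 'I_n) : nat_of_ord (maxo p) = maxn (nat_of_ord p.1) (nat_of_ord p.2).
Proof. by rewrite /maxo /maxn; case: ifP. Qed.

Lemma monoP n (P : {set 'I_n * 'I_n}) p q : mono P -> p \in P -> q \in P ->
  (p.1 < q.1)%N = (p.2 < q.2)%N.
Proof.
move=> /forallP /(_ p) H pP qP.
by move: H; rewrite pP /= => /forallP /(_ q); rewrite qP /= => /eqP.
Qed.

Lemma mono_max_inj n (P : {set 'I_n * 'I_n}) : mono P -> allbad P ->
  {in P &, injective (@maxo n)}.
Proof.
move=> mP /forallP bP [a b] [c d] pP qP /(congr1 (@nat_of_ord n)); rewrite !val_maxo /= => E.
have h1 := monoP mP pP qP; have h2 := monoP mP qP pP; simpl in h1, h2.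
have := bP (a, b); rewrite pP /= => /eqP b1.
have := bP (c, d); rewrite qP /= => /eqP b2.
have b1' : (a : nat) <> b by move=> h; apply: b1; apply: val_inj.
have b2' : (c : nat) <> d by move=> h; apply: b2; apply: val_inj.
have h1' : (a < c)%N <-> (b < d)%N by rewrite h1.
have h2' : (c < a)%N <-> (d < b)%N by rewrite h2.
have [e1 e2] : (a : nat) = c /\ (b : nat) = d by lia.
by rewrite (val_inj e1) (val_inj e2).
Qed.

Lemma ev_card n k (P : {set 'I_n * 'I_n}) : mono P -> allbad P ->
  (#|[set S : {ffun 'I_n -> 'I_k.+1} | [forall p in P, S p.1 == S p.2]]|
    <= k.+1 ^ (n - #|P|))%N.
Proof.
move=> mP bP; set E := [set S | _].
set D := [set maxo p | p in P].
have cD : #|D| = #|P| by rewrite card_in_imset //; apply: mono_max_inj.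
pose f (S : {ffun 'I_n -> 'I_k.+1}) : {ffun 'I_n -> 'I_k.+1} :=
  [ffun i => if i \in D then ord0 else S i].
have finj : {in E &, injective f}.
  move=> S S'; rewrite !inE => /forallP hS /forallP hS' Efs.
  apply/ffunP => i.
  suff H : forall j (i0 : 'I_n), (i0 < j)%N -> S i0 = S' i0 by apply: (H i.+1).
  elim=> [//|j IH] i0 lt.
  case: (boolP (i0 \in D)) => Di; last first.
    by have := congr1 (fun g : {ffun 'I_n -> 'I_k.+1} => g i0) Efs; rewrite !ffunE (negbTE Di).
  case/imsetP: Di lt => p pP ->.
  have := hS p; have := hS' p; rewrite pP /= => /eqP e' /eqP e.
  have := bP; move=> /forallP /(_ p); rewrite pP /= => ne.
  rewrite /maxo; case: ifP => lt12 lt.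
    by rewrite -e -e' IH // (leq_trans lt12) // -ltnS.
  have lt21 : (p.2 < p.1)%N.
    rewrite ltn_neqAle leqNgt lt12 andbT; apply: contra ne => /eqP h.
    by apply/eqP; apply: val_inj.
  by rewrite e e' IH // (leq_trans lt21) // -ltnS.
rewrite -(card_in_imset finj).
apply: leq_trans (subset_leq_card (_ : [set f x | x in E] \subset
   pffun_on (ord0 : 'I_k.+1) (~: D) predT)) _.
  apply/subsetP => _ /imsetP[S _ ->]; apply/pffun_onP; split => //.
  apply/subsetP => i; rewrite !inE ffunE; apply: contra => ->; by [].
rewrite card_pffun_on.
have -> : #|[pred x : 'I_k.+1 | true]| = k.+1 by rewrite -[RHS]card_ord; apply: eq_card.
have -> : #|~: D| = (n - #|P|)%N.
  by have := cardsC D; rewrite card_ord cD => /(congr1 (subn^~ #|P|)); rewrite addKn.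
by [].
Qed.

Definition rk n (A : {set 'I_n}) (x : 'I_n) : nat := #|[set a in A | (a < x)%N]|.

Lemma rk_inj n (A : {set 'I_n}) : {in A &, injective (rk A)}.
Proof.
suff H : forall y y', y \in A -> y' \in A -> (y < y')%N -> (rk A y < rk A y')%N.
  move=> y y' yA y'A E; case: (ltngtP y y') => h.
  - by have := H _ _ yA y'A h; rewrite E ltnn.
  - by have := H _ _ y'A yA h; rewrite E ltnn.
  - exact: val_inj.
move=> y y' yA y'A lt; rewrite /rk.
have nin : y \notin [set a in A | (a < y)%N] by rewrite inE ltnn andbF.
apply: (leq_trans _ (subset_leq_card (_ : y |: [set a in A | (a < y)%N] \subset _))).
  by rewrite cardsU1 nin.
apply/subsetP => a; rewrite !inE => /orP[/eqP->|/andP[aA lta]]; first by rewrite yA lt.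
by rewrite aA (ltn_trans lta lt).
Qed.

Lemma fst_inj n (P : {set 'I_n * 'I_n}) : mono P -> {in P &, injective fst}.
Proof.
move=> mP [a b] [c d] pP qP /= E; subst c.
have h1 := monoP mP pP qP; have h2 := monoP mP qP pP; rewrite /= ltnn in h1 h2.
by case: (ltngtP b d) h1 h2 => // /val_inj ->.
Qed.

Lemma snd_inj n (P : {set 'I_n * 'I_n}) : mono P -> {in P &, injective snd}.
Proof.
move=> mP [a b] [c d] pP qP /= E; subst d.
have h1 := monoP mP pP qP; have h2 := monoP mP qP pP; rewrite /= ltnn in h1 h2.
by case: (ltngtP a c) h1 h2 => // /val_inj ->.
Qed.

Lemma rk_img n (P : {set 'I_n * 'I_n}) (g : 'I_n * 'I_n -> 'I_n) x :
  {in P &, injective g} ->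
  rk (g @: P) x = #|[set q in P | (g q < x)%N]|.
Proof.
move=> ginj; rewrite /rk.
have -> : [set a in g @: P | (a < x)%N] = g @: [set q in P | (g q < x)%N].
  apply/setP => a; rewrite inE; apply/andP/imsetP.
    by case=> /imsetP[q qP ->] lt; exists q; rewrite // inE qP.
  by case=> q; rewrite inE => /andP[qP lt] ->; rewrite imset_f.
rewrite card_in_imset //; move=> u v; rewrite !inE => /andP[uP _] /andP[vP _].
exact: ginj.
Qed.

Lemma rank_eq n (P : {set 'I_n * 'I_n}) p : mono P -> p \in P ->
  rk (fst @: P) p.1 = rk (snd @: P) p.2.
Proof.
move=> mP pP; rewrite (rk_img _ (fst_inj mP)) (rk_img _ (snd_inj mP)).
apply: eq_card => q; rewrite !inE; case: (boolP (q \in P)) => //= qP.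
exact: (monoP mP qP pP).
Qed.

Lemma cand_card n m :
  (#|[set P : {set 'I_n * 'I_n} | mono P && (#|P| == m)]| <= 'C(n, m) ^ 2)%N.
Proof.
set C := [set P | _].
pose g (P : {set 'I_n * 'I_n}) := (fst @: P, snd @: P).
have ginj : {in C &, injective g}.
  move=> P P'; rewrite !inE => /andP[mP /eqP cP] /andP[mP' /eqP cP'] [E1 E2].
  suff sub : P \subset P'.
    by apply/eqP; rewrite eqEcard sub cP cP' leqnn.
  apply/subsetP => p pP.
  have : p.1 \in fst @: P' by rewrite -E1 imset_f.
  case/imsetP => p' p'P e.
  have r1 := rank_eq mP pP; have r2 := rank_eq mP' p'P.
  rewrite E1 E2 e r2 in r1.
  have e2 : p'.2 = p.2.
    apply: (rk_inj (A := snd @: P')) => //; [exact: imset_f | rewrite -E2; exact: imset_f].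
  suff -> : p = p' by [].
  by move: e e2; clear; case: p p' => [a b] [c d] /= -> ->.
rewrite -(card_in_imset ginj).
set Dm := [set A : {set 'I_n} | #|A| == m].
apply: leq_trans (subset_leq_card (_ : g @: C \subset setX Dm Dm)) _.
  apply/subsetP => x /imsetP[P PC ->]; move: PC; rewrite inE => /andP[mP /eqP cP].
  by rewrite !inE /= !card_in_imset ?cP ?eqxx //; [exact: (snd_inj mP) | exact: (fst_inj mP)].
by rewrite (cardsX Dm Dm) /Dm card_draws card_ord expnS expn1.
Qed.

Lemma card_bigcup_le (I T : finType) (C : {set I}) (F : I -> {set T}) :
  (#|\bigcup_(i in C) F i| <= \sum_(i in C) #|F i|)%N.
Proof.
elim/big_rec2: _ => [|i A s _ IH]; first by rewrite cards0.
apply: leq_trans (leq_card_setU _ _) _; by rewrite leq_add2l.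
Qed.

Lemma sub_card (T : finType) (B : {set T}) m : (m <= #|B|)%N ->
  exists2 P : {set T}, P \subset B & #|P| = m.
Proof.
move=> h; have [d Hd] : exists d, #|B| = (m + d)%N by exists (#|B| - m)%N; rewrite subnKC.
elim: d B Hd {h} => [|d IH] B Hd; first by exists B; rewrite ?Hd ?addn0.
have : (0 < #|B|)%N by rewrite Hd addnS.
rewrite card_gt0 => /set0Pn[x xB].
have [P PB cP] : exists2 P : {set T}, P \subset B :\ x & #|P| = m.
  apply: IH; have := cardsD1 x B; rewrite xB Hd addnS add1n => -[] //.
exists P => //; apply: subset_trans PB _; exact: subsetDl.
Qed.

Lemma bad_count n k m (X : {set {ffun 'I_n -> 'I_k.+1}}) :
  (forall S, S \in X -> exists P : {set 'I_n * 'I_n},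
     [&& mono P, allbad P, #|P| == m & [forall p in P, S p.1 == S p.2]]) ->
  (#|X| <= 'C(n, m) ^ 2 * k.+1 ^ (n - m))%N.
Proof.
move=> HX.
set C := [set P : {set 'I_n * 'I_n} | [&& mono P, allbad P & #|P| == m]].
pose ev (P : {set 'I_n * 'I_n}) := [set S : {ffun 'I_n -> 'I_k.+1} | [forall p in P, S p.1 == S p.2]].
have sub : X \subset \bigcup_(P in C) ev P.
  apply/subsetP => S /HX [P /and4P[mP bP cP eP]]; apply/bigcupP; exists P.
    by rewrite inE mP bP cP.
  by rewrite inE.
apply: leq_trans (subset_leq_card sub) _.
apply: leq_trans (card_bigcup_le _ _) _.
apply: leq_trans (_ : (\sum_(P in C) k.+1 ^ (n - m) <= _)%N).
  apply: leq_sum => P; rewrite inE => /and3P[mP bP /eqP cP]; rewrite -cP.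
  exact: ev_card.
rewrite sum_nat_const leq_mul2r; apply/orP; right.
apply: leq_trans (cand_card n m); apply: subset_leq_card.
by apply/subsetP => P; rewrite !inE => /and3P[-> _ ->].
Qed.
End CombM.
Import CombM.

Module RealM.
Local Open Scope ring_scope.

Lemma ffact_le n m : (n ^_ m <= n ^ m)%N.
Proof.
elim: m => [|m IH]; first by rewrite ffactn0 expn0.
by rewrite ffactnSr expnSr leq_mul // leq_subr.
Qed.

Lemma pow_fact (R : realType) m : (m%:R : R) ^+ m <= expR 1 ^+ m * (m`!)%:R.
Proof.
case: m => [|m]; first by rewrite !expr0 fact0 mul1r.
have h := @expR_ge1Dxn R (m.+1%:R) m (ler0n _ _).
rewrite -expRM_natl mulr1.
have f0 : 0 < (m.+1`!)%:R :> R by rewrite ltr0n fact_gt0.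
set a := _ ^+ _ in h *; set f := (m.+1`!)%:R in h f0 *.
have h' : a / f <= expR m.+1%:R by lra.
apply: le_trans (_ : (a / f) * f <= _); first by rewrite divfK // lt0r_neq0.
by rewrite ler_wpM2r // ltW.
Qed.

Lemma binom_bound (R : realType) (eps : R) n m k : 0 < eps -> (0 < m)%N ->
  n%:R * eps <= 2 * m%:R -> 8 * expR 1 ^+ 2 <= k%:R * eps ^+ 2 ->
  (2 * 'C(n, m) ^ 2 <= k ^ m)%N.
Proof.
move=> e0 m0 hn hk.
set E := expR (1:R).
have E0 : 0 < E := expR_gt0 1.
set c : R := ('C(n,m))%:R.
set f : R := (m`!)%:R.
have f0 : 0 < f by rewrite ltr0n fact_gt0.
have c0 : 0 <= c by rewrite ler0n.
have h1 : c * f <= n%:R ^+ m by rewrite /c /f -natrM -natrX ler_nat bin_ffact ffact_le.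
have h2 : c * eps ^+ m <= (2 * E) ^+ m.
  have h : c * f * eps ^+ m <= (2 * E) ^+ m * f.
    apply: le_trans (_ : n%:R ^+ m * eps ^+ m <= _).
      by rewrite ler_wpM2r // exprn_ge0 // ltW.
    rewrite -exprMn.
    apply: le_trans (_ : (2 * m%:R) ^+ m <= _).
      apply: lerXn2r; rewrite ?nnegrE //.
      by rewrite mulr_ge0 // ltW.
      by rewrite mulr_ge0.
    rewrite !exprMn -mulrA ler_wpM2l ?exprn_ge0 //.
    exact: pow_fact.
  by rewrite -(ler_pM2r f0) mulrAC.
have h3 : 2 * c ^+ 2 * (eps ^+ 2) ^+ m <= (k%:R * eps ^+ 2) ^+ m.
  have h4 : (c * eps ^+ m) ^+ 2 <= ((2 * E) ^+ m) ^+ 2.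
    apply: lerXn2r; rewrite ?nnegrE //.
      by rewrite mulr_ge0 // exprn_ge0 // ltW.
    by rewrite exprn_ge0 // mulr_ge0 // ltW.
  rewrite -mulrA -!exprM mulnC exprM -exprMn.
  apply: le_trans (_ : 2 * ((2 * E) ^+ m) ^+ 2 <= _).
    by rewrite ler_wpM2l.
  rewrite -exprM mulnC exprM.
  apply: le_trans (_ : 2 ^+ m * ((2 * E) ^+ 2) ^+ m <= _).
    rewrite ler_wpM2r ?exprn_ge0 //; first by rewrite mulr_ge0 // ltW.
    case: (m) m0 => // m' _; rewrite exprS -[X in X <= _]mulr1 ler_wpM2l // exprn_ege1 // ler1n //.
  apply: (le_trans (_ : _ <= (2 * (2 * E) ^+ 2) ^+ m)).
    by rewrite [X in _ <= X]exprMn.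
  apply: lerXn2r; rewrite ?nnegrE //.
    by rewrite mulr_ge0 // exprn_ge0 // mulr_ge0 // ltW.
    by rewrite mulr_ge0 // exprn_ge0 // ltW.
  apply: le_trans hk; rewrite exprMn mulrA le_eqVlt; apply/orP; left; apply/eqP; congr (_ * _).
  by rewrite -natrX -natrM.
have p0 : 0 < (eps ^+ 2) ^+ m by rewrite !exprn_gt0.
rewrite [X in _ <= X]exprMn ler_pM2r // in h3.
by rewrite -(ler_nat R) natrM natrX natrX.
Qed.
End RealM.
Import RealM.
Local Open Scope ring_scope.
Lemma bad_cover (R : realType) (eps : R) n k (S : {ffun 'I_n -> 'I_k}) m :
  (forall b : nat, eps * n%:R <= b%:R -> (m <= b)%N) ->
  ~~ self_matching eps S ->
  exists P : {set 'I_n * 'I_n},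
     [&& mono P, allbad P, #|P| == m & [forall p in P, S p.1 == S p.2]].
Proof.
move=> hm /forallPn [M]; rewrite negb_imply -leNgt => /andP[mM hb].
move: mM => /andP[/forallP eqM /forallP monM].
set B := [set p in M | p.1 != p.2].
have : (m <= #|B|)%N by apply: hm.
case/sub_card => P PB /eqP cP.
have PM : forall p, p \in P -> (p \in M) && (p.1 != p.2).
  by move=> p /(subsetP PB); rewrite inE.
exists P; rewrite cP; apply/and4P; split => //.
- apply/forallP => p; apply/implyP => pP; apply/forallP => q; apply/implyP => qP.
  have /andP[pM _] := PM p pP; have /andP[qM _] := PM q qP.
  by have := monM p; rewrite pM /= => /forallP /(_ q); rewrite qM.
- by apply/forallP => p; apply/implyP => /PM /andP[].
- apply/forallP => p; apply/implyP => /PM /andP[pM _].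
  by have := eqM p; rewrite pM.
Qed.

Lemma maxn_aux t : (t.+1 <= 2 * maxn 1 t)%N.
Proof. lia. Qed.

Lemma cnt_aux c a b : (a + b)%N = c -> (2 * b <= c)%N -> (c <= 2 * a)%N.
Proof. lia. Qed.

Theorem theorem35 (R : realType) :
  exists C p : R, 0 < C /\ 0 < p /\
    forall eps : R, 0 < eps < 1 ->
      exists k : nat, (0 < k)%N /\ k%:R <= C / eps ^+ 3 /\
        forall n : nat, (0 < n)%N -> p <= prob_self_matching eps n k.
Proof.
set E := expR (1:R).
have E0 : 0 < E := expR_gt0 1.
have E2 : 0 <= E ^+ 2 by rewrite exprn_ge0 // ltW.
exists (8 * E ^+ 2 + 1), (1/2); split; first lra.
split; first lra.
move=> eps /andP[e0 e1].
have e3 : 0 < eps ^+ 3 by rewrite exprn_gt0.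
have e2 : 0 < eps ^+ 2 by rewrite exprn_gt0.
have e32 : eps ^+ 3 <= eps ^+ 2 by nra.
have e21 : eps ^+ 2 <= 1 by nra.
set x := (8 * E ^+ 2 + 1) / eps ^+ 3.
have x0 : 0 <= x by rewrite /x divr_ge0 // ?ltW //; lra.
have /andP[kle klt] := truncn_itv x0.
set k0 := Num.truncn x in kle klt.
have key : 8 * E ^+ 2 <= k0%:R * eps ^+ 2.
  have h : 8 * E ^+ 2 + 1 < k0.+1%:R * eps ^+ 3 by rewrite -ltr_pdivrMr.
  rewrite -natr1 in h.
  have h2 : k0%:R * eps ^+ 3 <= k0%:R * eps ^+ 2 by rewrite ler_wpM2l.
  have h3 : eps ^+ 3 <= 1 by apply: le_trans e21.
  nra.
have k0pos : (0 < k0)%N.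
  rewrite -(ltr_nat R); have : 0 < k0%:R * eps ^+ 2 by apply: lt_le_trans key; rewrite mulr_gt0 // exprn_gt0.
  by rewrite pmulr_lgt0.
exists k0; split => //; split => // n n0.
have [k Hk] : exists k, k0 = k.+1 by exists k0.-1; rewrite prednK.
rewrite Hk in key *.
set m := maxn 1 (Num.truncn (eps * n%:R)).
have en0 : 0 < eps * n%:R by rewrite mulr_gt0 // ltr0n.
have hm : forall b : nat, eps * n%:R <= b%:R -> (m <= b)%N.
  move=> b hb; rewrite geq_max; apply/andP; split.
    by rewrite -(ltr_nat R); apply: lt_le_trans hb.
  rewrite -(ler_nat R); apply: le_trans hb.
  by have /andP[] := truncn_itv (ltW en0).
have m0 : (0 < m)%N by rewrite leq_max.
have mn : (m <= n)%N.
  by apply: (hm n); rewrite -[X in _ <= X]mul1r ler_wpM2r ?ler0n // ltW.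
have hn : n%:R * eps <= 2 * m%:R.
  have /andP[_ t1] := truncn_itv (ltW en0).
  have hm2 : ((Num.truncn (eps * n%:R)).+1 <= 2 * m)%N by rewrite /m; apply: maxn_aux.
  rewrite -(ler_nat R) natrM in hm2; rewrite mulrC; apply: ltW; exact: lt_le_trans t1 hm2.
have hbin := @binom_bound R eps n m k.+1 e0 m0 hn key.
set G := [set S : {ffun 'I_n -> 'I_k.+1} | self_matching eps S].
have cnt : (#|~: G| <= 'C(n, m) ^ 2 * k.+1 ^ (n - m))%N.
  by apply: bad_count => S; rewrite !inE; exact: bad_cover hm.
have tot : (#|G| + #|~: G| = k.+1 ^ n)%N by rewrite cardsC card_ffun !card_ord.
have hb2 : (2 * #|~: G| <= k.+1 ^ n)%N.
  apply: (leq_trans (leq_mul (leqnn 2) cnt)).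
  have -> : (k.+1 ^ n = k.+1 ^ (n - m) * k.+1 ^ m)%N by rewrite -expnD subnK.
  rewrite mulnA (mulnC (k.+1 ^ (n - m))%N).
  exact: leq_mul hbin (leqnn _).
have h2 : (k.+1 ^ n <= 2 * #|G|)%N.
  exact: cnt_aux tot hb2.
rewrite /prob_self_matching -/G.
have kn : 0 < (k.+1 ^ n)%:R :> R by rewrite ltr0n expn_gt0.
have h2' : (k.+1 ^ n)%:R <= 2 * (#|G|)%:R :> R by rewrite -natrM ler_nat.
set a := (#|G|)%:R in h2' *; set b := (k.+1 ^ n)%:R in kn h2' *.
apply: le_trans (_ : (b / 2) / b <= a / b).
  rewrite le_eqVlt; apply/orP; left; apply/eqP; field.
  by rewrite lt0r_neq0.
have hb0 : 0 <= b^-1 by rewrite invr_ge0 ltW.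
apply: ler_wpM2r hb0 _ _ _; lra.
Qed.
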